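(* Let $\lambda,\nu$ be partitions and $s$ a nonnegative integer with $|\nu|\le|\lambda|+s$ and $\mathrm{Std}^0_s(\nu\setminus\lambda)\ne\emptyset$, and suppose that $\mathsf t_{k\leftrightarrow k+1}$ exists for every $\mathsf t\in\mathrm{Std}^0_s(\nu\setminus\lambda)$ and every $1\le k\le s-1$. Then neither of the skew partitions $\nu\ominus(\lambda\cap\nu)$ and $\lambda\ominus(\lambda\cap\nu)$ contains two nodes in the same column.
   Context: $\lambda\cap\nu$ is the partition with parts $\min\{\lambda_i,\nu_i\}$; for $\alpha\subseteq\beta$, $\beta\ominus\alpha$ is the set difference of Young diagrams. $\pm\varepsilon_i$ ($i\ge1$) adds/removes a box in row $i$, $\varepsilon_0=0$. $\mathrm{Std}_s(\nu\setminus\lambda)$ is the set of sequences $\mathsf t=(-\varepsilon_{i_1},+\varepsilon_{j_1},\dots,-\varepsilon_{i_s},+\varepsilon_{j_s})$, $i_k,j_k\ge0$, such that with $\mathsf t(0)=\lambda$, $\mathsf t(k-\frac12)=\mathsf t(k-1)-\varepsilon_{i_k}$, $\mathsf t(k)=\mathsf t(k-\frac12)+\varepsilon_{j_k}$ all are partitions and $\mathsf t(s)=\nu$; $(-\varepsilon_{i_k},+\varepsilon_{j_k})$ is the $k$-th integral step. $\mathrm{Std}^0_s(\nu\setminus\lambda)$ is the subset of those with no integral step $(-\varepsilon_0,+\varepsilon_0)$ and with $\#\{k:i_k=i\}\le\lambda_i$ for every $i\ge1$. $\mathsf t_{k\leftrightarrow k+1}$ is the sequence obtained by interchanging the $k$-th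 and $(k+1)$-th integral steps; it exists if it lies in $\mathrm{Std}_s(\nu\setminus\lambda)$. *)

(* Defs.v *)
From mathcomp Require Import all_boot.
Set Implicit Arguments. Unset Strict Implicit. Unset Printing Implicit Defensive.

Definition is_part (p : seq nat) : bool := sorted geq p && all (fun x => 0 < x) p.

(* Row i (i >= 1) of a partition; row 0 is 0 (never used for boxes). *)
Definition row (p : seq nat) (i : nat) : nat :=
  if i is i'.+1 then nth 0 p i' else 0.

(* Intermediate shapes are represented by their row-length functions
   (rows indexed from 1). *)
Definition shape := nat -> nat.

Definition is_part_fun (f : shape) : Prop := forall i, 0 < i -> f i.+1 <= f i.

(* +eps_j : add a box in row j (eps_0 = 0) *)
Definition add_box (f : shape) (j : nat) : shape :=
  fun r => if (j != 0) && (r == j) then (f r).+1 else f r.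
(* -eps_i : remove a box from row i (eps_0 = 0); only meaningful if f i > 0 *)
Definition rem_box (f : shape) (i : nat) : shape :=
  fun r => if (i != 0) && (r == i) then (f r).-1 else f r.

(* An integral step (-eps_i, +eps_j) is encoded by the pair (i, j). *)
Definition step := (nat * nat)%type.

Definition apply_step (f : shape) (st : step) : shape :=
  add_box (rem_box f st.1) st.2.

Definition state (lam : seq nat) (t : seq step) (k : nat) : shape :=
  foldl apply_step (row lam) (take k t).

Definition Std (s : nat) (lam nu : seq nat) (t : seq step) : Prop :=
  size t = s /\
  (forall k, k < s ->
     let f := state lam t k in
     let st := nth (0, 0) t k in
     (st.1 = 0 \/ 0 < f st.1) /\
     is_part_fun (rem_box f st.1) /\
     is_part_fun (apply_step f st)) /\
  (forall r, 0 < r -> state lam t s r = row nu r).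

Definition Std0 (s : nat) (lam nu : seq nat) (t : seq step) : Prop :=
  Std s lam nu t /\
  (forall k, k < s -> nth (0, 0) t k <> (0, 0)) /\
  (forall i, 0 < i -> count (fun st : step => st.1 == i) t <= row lam i).

(* t_{k <-> k+1} : interchange the k-th and (k+1)-th integral steps (1-indexed) *)
Definition swap_steps (t : seq step) (k : nat) : seq step :=
  set_nth (0, 0) (set_nth (0, 0) t k.-1 (nth (0, 0) t k)) k (nth (0, 0) t k.-1).

Definition pcap (lam nu : seq nat) : seq nat := [seq minn x.1 x.2 | x <- zip lam nu].

Definition in_skew (beta alpha : seq nat) (r c : nat) : bool :=
  (0 < r) && (row alpha r < c <= row beta r).

Definition no_two_in_column (beta alpha : seq nat) : Prop :=
  forall r1 r2 c, r1 < r2 -> in_skew beta alpha r1 c -> in_skew beta alpha r2 c -> False.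

(* Main.v *)
Require Import Defs.
From mathcomp Require Import all_boot.
From mathcomp Require Import zify.

Lemma swap_cat (u : seq step) x y w :
  swap_steps (u ++ x :: y :: w) (size u).+1 = u ++ y :: x :: w.
Proof.
rewrite /swap_steps /=.
elim: u => [|a u IH] //=.
by rewrite -IH.
Qed.

Lemma Std0_swap lam nu s u x y w :
  (forall t, Std0 s lam nu t -> forall k, 1 <= k <= s - 1 -> Std s lam nu (swap_steps t k)) ->
  Std0 s lam nu (u ++ x :: y :: w) -> Std0 s lam nu (u ++ y :: x :: w).
Proof.
move=> H H0.
have Hp : perm_eq (u ++ x :: y :: w) (u ++ y :: x :: w).
  by rewrite perm_cat2l; apply/permP => a /=; rewrite addnCA.
have Hsz : size (u ++ x :: y :: w) = s by case: H0 => [[]].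
case: (H0) => HS [Hnz Hc].
split.
  rewrite -swap_cat; apply: H => //.
  move: Hsz; rewrite size_cat /=; lia.
split.
  move=> k Hk Heq.
  have Hm : nth (0,0) (u ++ y :: x :: w) k \in u ++ y :: x :: w.
    by apply: mem_nth; rewrite -(perm_size Hp) Hsz.
  rewrite Heq in Hm.
  rewrite -(perm_mem Hp) in Hm.
  apply: (Hnz (index (0,0) (u ++ x :: y :: w))).
    by rewrite -Hsz index_mem.
  by rewrite nth_index.
move=> i Hi; rewrite -((permP Hp) (fun st : step => st.1 == i)); exact: Hc.
Qed.

Section Sort.
Variables (S : seq step -> Prop).
Hypothesis HS : forall u x y w, S (u ++ x :: y :: w) -> S (u ++ y :: x :: w).

Lemma move_right t : forall u v x, S (u ++ x :: t ++ v) -> S (u ++ t ++ x :: v).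
Proof.
elim: t => [|y t IH] u v x //= H.
have := HS _ _ _ _ H; rewrite -cat_rcons => /IH.
by rewrite cat_rcons.
Qed.

Lemma sort_prefix (P : pred step) t : forall u v, S (u ++ t ++ v) ->
  exists w, S (u ++ filter P t ++ w).
Proof.
elim: t => [|x t IH] u v /= H.
  by exists v.
case: (P x).
  move: H; rewrite -cat_rcons => /IH [w Hw]; exists w; by rewrite -cat_rcons.
by move: H => /move_right /IH.
Qed.
End Sort.

Lemma state_S lam (t : seq step) k : k < size t ->
  state lam t k.+1 = apply_step (state lam t k) (nth (0,0) t k).
Proof.
by move=> Hk; rewrite /state (take_nth (0,0) Hk) -cats1 foldl_cat.
Qed.

Lemma key lam nu s (P : pred step) t :
  (forall t, Std0 s lam nu t -> forall k, 1 <= k <= s - 1 -> Std s lam nu (swap_steps t k)) ->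
  Std0 s lam nu t -> 0 < count P t ->
  is_part_fun (foldl apply_step (row lam) (filter P t)).
Proof.
move=> H H0 Hc.
have [w Hw] : exists w, Std0 s lam nu ([::] ++ filter P t ++ w).
  apply: (sort_prefix (Std0 s lam nu) _ P t [::] [::]).
    by move=> u x y w'; apply: Std0_swap.
  by rewrite /= cats0.
case: Hw => [[Hsz [Hv _]] _].
set t' := [::] ++ _ ++ _ in Hsz Hv.
have Hm : size (filter P t) = count P t by rewrite size_filter.
have Hle : count P t <= s by rewrite -Hsz /t' /= size_cat Hm; lia.
have Hk : (count P t).-1 < s by lia.
case: (Hv _ Hk) => _ [_ Hpf].
have E : state lam t' (count P t) = foldl apply_step (row lam) (filter P t).
  by rewrite /state /t' /= take_size_cat.
rewrite -E.
have -> : count P t = (count P t).-1.+1 by lia.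
by rewrite state_S // Hsz.
Qed.

Lemma row_pcap lam nu r : row (pcap lam nu) r = minn (row lam r) (row nu r).
Proof.
case: r => //= n; rewrite /pcap.
elim: lam nu n => [|a l IH] [|b m] [|n] /=; rewrite ?nth_nil ?min0n ?minn0 //.
Qed.

Lemma row_mono p a b : is_part p -> 0 < a <= b -> row p b <= row p a.
Proof.
case/andP=> Hs _ Hab.
case: a b Hab => [|a] [|b] //= Hab.
case: (ltnP b (size p)) => Hb; last by rewrite nth_default.
have Htr : transitive geq by move=> x y z H1 H2; exact: leq_trans H2 H1.
apply: (sorted_leq_nth Htr _ 0 Hs) => //; [by move=> x; exact: leqnn | rewrite inE /=; lia].
Qed.

Lemma stepA f i j q : (i = 0 \/ 0 < f i) ->
  apply_step f (i,j) q.+1 <= f q.+1 + ((q.+1 == j) && (q.+1 != i)).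
Proof.
rewrite /apply_step /add_box /rem_box /= => Hv.
case: (q.+1 =P i) => [Ei|ne]; case: (q.+1 =P j) => [Ej|ne'];
  rewrite ?andbT ?andbF /= -?Ei -?Ej //=.
- case: Hv => [Hv|Hv]; [by rewrite -Ei in Hv | rewrite -Ei in Hv]. all: rewrite ?addn0 ?addn1 ?leqnn ?ltnSn ?ltn_predL ?leq_pred //.
Qed.

Lemma stepB f i j q : 0 < q ->
  f q <= apply_step f (i,j) q + ((q == i) && (q != j)).
Proof.
rewrite /apply_step /add_box /rem_box /= => Hq.
have Hq0 : (q != 0) = true by case: (q) Hq.
case: (q =P i) => [Ei|ne]; case: (q =P j) => [Ej|ne'];
  rewrite ?andbT ?andbF /= -?Ei -?Ej ?Hq0 /= ?addn0 ?addn1 ?leqnn //.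
all: exact: leqSpred.
Qed.

Lemma stepA2 f i j q : (q.+1 == j) && (q.+1 != i) ->
  apply_step f (i,j) q.+1 = (f q.+1).+1 /\ apply_step f (i,j) q <= f q.
Proof.
case/andP => /eqP Ej Ni.
rewrite /apply_step /add_box /rem_box /= -Ej eqxx.
case: (q.+1 =P i) Ni => [E|_ _] //.
have -> : (q == q.+1) = false by elim: q {Ej}.
case: (i != 0) => /=; case: (q == i) => /=; split => //; exact: leq_pred.
Qed.

Lemma prefA q l f : all (fun st : step => (q.+1 == st.2) && (q.+1 != st.1)) l ->
  foldl apply_step f l q.+1 = f q.+1 + size l /\ foldl apply_step f l q <= f q.
Proof.
elim: l f => [|[i j] l IH] f /=; first by rewrite addn0.
case/andP => Hst Hl.
have [E1 E2] := stepA2 f i j q Hst.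
have [H1 H2] := IH (apply_step f (i,j)) Hl.
split; first by rewrite H1 E1 addSnnS.
exact: leq_trans H2 E2.
Qed.

Lemma stepB2 f i j q : 0 < q -> (q == i) && (q != j) ->
  apply_step f (i,j) q = (f q).-1 /\ f q.+1 <= apply_step f (i,j) q.+1.
Proof.
move=> Hq; case/andP => /eqP Ei Nj.
have Hq0 : (q != 0) = true by case: (q) Hq.
rewrite /apply_step /add_box /rem_box /= -Ei eqxx Hq0 /=.
case: (q =P j) Nj => [E|_ _] //.
have -> : (q.+1 == q) = false by elim: q {Ei Hq Hq0}.
case: (j != 0) => /=; case: (q.+1 == j) => /=; split => //.
Qed.

Lemma prefB q l f : 0 < q -> all (fun st : step => (q == st.1) && (q != st.2)) l ->
  foldl apply_step f l q <= f q - size l /\ f q.+1 <= foldl apply_step f l q.+1.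
Proof.
move=> Hq; elim: l f => [|[i j] l IH] f /=; first by rewrite subn0.
case/andP => Hst Hl.
have [E1 E2] := stepB2 f i j q Hq Hst.
have [H1 H2] := IH (apply_step f (i,j)) Hl.
split; last exact: leq_trans E2 H2.
apply: (leq_trans H1); rewrite E1; lia.
Qed.

Lemma boundA lam nu s t q : Std s lam nu t -> forall k, k <= s ->
  state lam t k q.+1 <= row lam q.+1 +
    count (fun st : step => (q.+1 == st.2) && (q.+1 != st.1)) (take k t).
Proof.
case => [Hsz [Hv _]]; elim => [|k IH] Hk.
  by rewrite /state take0 /= addn0.
have Hk' : k < size t by rewrite Hsz.
rewrite state_S // (take_nth (0,0) Hk') -cats1 count_cat /=.
case: (Hv k Hk) => Hval _; move: Hval.
case: (nth (0,0) t k) => [i j] /= Hval.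
have := stepA (state lam t k) i j q Hval.
have := IH (ltnW Hk).
move=> H1 H2; rewrite addn0 addnA; apply: leq_trans H2 _; rewrite leq_add2r; exact: H1.
Qed.

Lemma boundB lam nu s t q : 0 < q -> Std s lam nu t -> forall k, k <= s ->
  row lam q <= state lam t k q +
    count (fun st : step => (q == st.1) && (q != st.2)) (take k t).
Proof.
move=> Hq; case => [Hsz [Hv _]]; elim => [|k IH] Hk.
  by rewrite /state take0 /= addn0.
have Hk' : k < size t by rewrite Hsz.
rewrite state_S // (take_nth (0,0) Hk') -cats1 count_cat /=.
case: (nth (0,0) t k) => [i j] /=.
have := stepB (state lam t k) i j q Hq.
have := IH (ltnW Hk).
move=> H1 H2; rewrite addn0; apply: leq_trans H1 _; rewrite addnCA addnC leq_add2l; exact: H2.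
Qed.

Theorem lemma4p22 (lam nu : seq nat) (s : nat) :
  is_part lam -> is_part nu ->
  sumn nu <= sumn lam + s ->
  (exists t, Std0 s lam nu t) ->
  (forall t, Std0 s lam nu t -> forall k, 1 <= k <= s - 1 -> Std s lam nu (swap_steps t k)) ->
  no_two_in_column nu (pcap lam nu) /\ no_two_in_column lam (pcap lam nu).
Proof.
move=> Hl Hn _ [t Ht] H.
have HS : Std s lam nu t by case: Ht.
have Hsz : size t = s by case: HS.
have Hfin : forall r, 0 < r -> state lam t s r = row nu r by case: HS => _ [].
have Htk : take s t = t by rewrite -Hsz take_size.
have keyA : forall q c, 0 < q -> row lam q < c -> c <= row nu q.+1 -> False.
  move=> q c Hq H1 H2.
  set PA := (fun st : step => (q.+1 == st.2) && (q.+1 != st.1)).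
  have Hb := boundA lam nu s t q HS s (leqnn s).
  rewrite Htk Hfin // -/PA in Hb.
  have Hmono := row_mono lam q q.+1 Hl.
  have Hm : 0 < count PA t.
    case E: (count PA t) Hb => [|m] // Hb.
    have : row lam q.+1 <= row lam q by apply: Hmono; rewrite Hq /=.
    lia.
  have Hp := key lam nu s PA t H Ht Hm q Hq.
  have [E1 E2] := prefA q (filter PA t) (row lam) (filter_all PA t).
  move: Hp; rewrite E1 size_filter.
  lia.
have keyB : forall q c, 0 < q -> row nu q < c -> c <= row lam q.+1 -> False.
  move=> q c Hq H1 H2.
  set PB := (fun st : step => (q == st.1) && (q != st.2)).
  have Hb := boundB lam nu s t q Hq HS s (leqnn s).
  rewrite Htk Hfin // -/PB in Hb.
  have Hmono := row_mono lam q q.+1 Hl.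
  have Hm : 0 < count PB t.
    case E: (count PB t) Hb => [|m] // Hb.
    have : row lam q.+1 <= row lam q by apply: Hmono; rewrite Hq /=.
    lia.
  have Hp := key lam nu s PB t H Ht Hm q Hq.
  have [E1 E2] := prefB q (filter PB t) (row lam) Hq (filter_all PB t).
  move: Hp E1 E2; rewrite size_filter.
  lia.
split.
- move=> r1 r2 c Hr /andP [Hr1 /andP [A1 B1]] /andP [Hr2 /andP [A2 B2]].
  rewrite row_pcap in A1 A2.
  have Hm := row_mono lam r1 r2.-1 Hl.
  apply: (keyA r2.-1 c).
  + lia.
  + have : 0 < r1 <= r2.-1 by lia.
    move/Hm; lia.
  + by rewrite prednK //; lia.
- move=> r1 r2 c Hr /andP [Hr1 /andP [A1 B1]] /andP [Hr2 /andP [A2 B2]].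
  rewrite row_pcap in A1 A2.
  have Hm := row_mono nu r1 r2.-1 Hn.
  apply: (keyB r2.-1 c).
  + lia.
  + have : 0 < r1 <= r2.-1 by lia.
    move/Hm; lia.
  + by rewrite prednK //; lia.
Qed.
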